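(* Let $K\subset\mathbb{R}^m$ be a convex cone containing the nonnegative orthant $\mathbb{R}^m_+$. For $i\in[m]$ let $C_i=\{c\in K: c_j\ge 0\ \forall j\ne i\}$ and let $C=\sum_{i=1}^m C_i$ (Minkowski sum). Then a vector $c\in\mathbb{R}^m$ having at least one negative entry belongs to $C$ if and only if $c\in\sum_{i: c_i<0} C_i$. *)

(* Defs.v *)
(* Vectors of R^m are row vectors 'rV[R]_m, entry j is c ord0 j. *)
From HB Require Import structures.
From mathcomp Require Import all_boot all_order all_algebra.
Set Implicit Arguments. Unset Strict Implicit. Unset Printing Implicit Defensive.
Import Order.TTheory GRing.Theory Num.Theory.
Local Open Scope ring_scope.

Definition is_cone (R : realFieldType) (m : nat) (K : 'rV[R]_m -> Prop) : Prop :=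
  forall (l : R) (x : 'rV[R]_m), 0 < l -> K x -> K (l *: x).

Definition is_convex (R : realFieldType) (m : nat) (K : 'rV[R]_m -> Prop) : Prop :=
  forall (t : R) (x y : 'rV[R]_m), 0 <= t -> t <= 1 -> K x -> K y ->
    K (t *: x + (1 - t) *: y).

Definition is_convex_cone (R : realFieldType) (m : nat) (K : 'rV[R]_m -> Prop) : Prop :=
  is_cone K /\ is_convex K.

Definition nonneg_orthant (R : realFieldType) (m : nat) (c : 'rV[R]_m) : Prop :=
  forall j : 'I_m, 0 <= c ord0 j.

Definition Cset (R : realFieldType) (m : nat) (K : 'rV[R]_m -> Prop) (i : 'I_m)
  (c : 'rV[R]_m) : Prop :=
  K c /\ forall j : 'I_m, j != i -> 0 <= c ord0 j.

(* Minkowski sum  \sum_{i in S} A_i  (the empty sum is {0}) *)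
Definition msum (R : realFieldType) (m : nat) (S : pred 'I_m)
  (A : 'I_m -> 'rV[R]_m -> Prop) (c : 'rV[R]_m) : Prop :=
  exists f : 'I_m -> 'rV[R]_m,
    (forall i, S i -> A i (f i)) /\ c = \sum_(i | S i) f i.

(* Main.v *)
Require Import Defs.
From HB Require Import structures.
From mathcomp Require Import all_boot all_order all_algebra.
From mathcomp Require Import lra ring.
Import Order.TTheory GRing.Theory Num.Theory.
Local Open Scope ring_scope.

Section Aux.
Variables (R : realFieldType) (m : nat) (K : 'rV[R]_m -> Prop).
Hypothesis hK : is_convex_cone K.
Hypothesis horth : forall c : 'rV[R]_m, nonneg_orthant c -> K c.

Lemma K0 : K 0.
Proof. by apply: horth => j; rewrite mxE. Qed.

Lemma Kadd x y : K x -> K y -> K (x + y).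
Proof.
move=> kx ky; case: hK => hc hv.
have h2 : (0 : R) < 2 by [].
have i0 : (0:R) <= 2^-1 by rewrite invr_ge0 ltW.
have i1 : (2:R)^-1 <= 1 by rewrite invf_le1 // ler1n.
have := hc 2 _ h2 (hv (2^-1) x y i0 i1 kx ky).
have -> : 1 - 2^-1 = 2^-1 :> R.
  by field.
by rewrite scalerDr !scalerA mulfV ?pnatr_eq0 // ?scale1r.
Qed.

Lemma Kscale a x : 0 <= a -> K x -> K (a *: x).
Proof.
rewrite le0r => /orP [/eqP -> _|ha kx]; first by rewrite scale0r; apply: K0.
by case: hK => hc _; apply: hc.
Qed.

Definition P (c : 'rV[R]_m) (A : {set 'I_m}) :=
  exists f : 'I_m -> 'rV[R]_m,
    (forall i, i \in A -> Cset K i (f i)) /\ c = \sum_(i in A) f i.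

Lemma step (c : 'rV[R]_m) (A : {set 'I_m}) (k l0 : 'I_m) : k \in A -> l0 \in A -> l0 != k -> 0 <= c ord0 k ->
  P c A -> P c (A :\ k).
Proof.
move=> kA l0A l0k ck [f [hf ce]]; rewrite ce.
set sk := \sum_(i in A :\ k) f i ord0 k.
have fik : forall i, i \in A :\ k -> 0 <= f i ord0 k.
  by move=> i /setD1P [ik iA]; case: (hf i iA) => _; apply; rewrite eq_sym.
have sk0 : 0 <= sk by apply: sumr_ge0.
have cE : (\sum_(i in A) f i) ord0 k = f k ord0 k + sk.
  by rewrite summxE (big_setD1 k).
rewrite ce cE in ck.
pose al i := if 0 < sk then f i ord0 k / sk else (i == l0)%:R.
have al0 : forall i, i \in A :\ k -> 0 <= al i.
  move=> i iA; rewrite /al; case: ifP => h; last by rewrite ler0n.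
  by rewrite divr_ge0 ?fik // ltW.
have al1 : \sum_(i in A :\ k) al i = 1.
  rewrite /al; case: (boolP (0 < sk)) => h.
    by rewrite -mulr_suml mulfV // gt_eqF.
  rewrite (big_setD1 l0) /=; last by rewrite !inE l0k.
  rewrite eqxx big1 ?addr0 // => i /setD1P [il _]; by rewrite (negbTE il).
exists (fun i => f i + al i *: f k); split.
  move=> i iA; have [ik iA'] := setD1P iA.
  case: (hf i iA') => Ki hi; case: (hf k kA) => Kk hk; split.
    by apply: Kadd => //; apply: Kscale => //; apply: al0.
  move=> j ji; rewrite !mxE.
  case: (eqVneq j k) => [->|jk].
    rewrite /al; case: ifP => h.
      have -> : f i ord0 k + f i ord0 k / sk * f k ord0 k
                = f i ord0 k / sk * (f k ord0 k + sk).
        by field; rewrite gt_eqF.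
      by rewrite mulr_ge0 // divr_ge0 ?fik // ltW.
    have fkk : 0 <= f k ord0 k.
      have : sk <= 0 by rewrite leNgt h.
      by move=> ?; lra.
    by rewrite addr_ge0 ?fik // mulr_ge0 ?ler0n.
  by rewrite addr_ge0 ?hi // mulr_ge0 ?hk // al0.
by rewrite big_split /= -scaler_suml al1 scale1r (big_setD1 k) //= addrC.
Qed.

Lemma reduce (c : 'rV[R]_m) (N : {set 'I_m}) (l0 : 'I_m) :
  l0 \in N -> (forall k, k \notin N -> 0 <= c ord0 k) ->
  forall n (A : {set 'I_m}), (#|A :\: N| <= n)%N -> N \subset A -> P c A -> P c N.
Proof.
move=> l0N hc; elim=> [|n IH] A hn NA PA /=.
  have : A :\: N = set0 by apply/eqP; rewrite -cards_eq0 -leqn0.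
  move/eqP; rewrite setD_eq0 => AN.
  by have -> : N = A by apply/eqP; rewrite eqEsubset NA AN.
case: (set_0Vmem (A :\: N)) => [e|[k /setDP [kA kN]]].
  by apply: (IH A) => //; rewrite e cards0.
apply: (IH (A :\ k)).
- have: #|A :\: N| = (#|(A :\ k) :\: N|).+1.
    rewrite [in LHS](cardsD1 k) !inE kA kN /=; congr (_.+1).
    by apply: eq_card => x; rewrite !inE; case: (x != k); case: (x \in N).
  by move=> e; rewrite e ltnS in hn.
- apply/subsetP => x xN; rewrite !inE (subsetP NA) // andbT.
  by apply/eqP => xk; move: kN; rewrite -xk xN.
- apply: (@step c A k l0) => //.
  + exact: (subsetP NA).
  + by apply/eqP => e; move: kN; rewrite -e l0N.
  + exact: hc.
Qed.
End Aux.

Theorem mainTheorem5 (R : realFieldType) (m : nat) (K : 'rV[R]_m -> Prop)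
  (hK : is_convex_cone K)
  (horth : forall c : 'rV[R]_m, nonneg_orthant c -> K c)
  (c : 'rV[R]_m) (hneg : exists j : 'I_m, c ord0 j < 0) :
  msum (fun _ => true) (Cset K) c <-> msum (fun i => c ord0 i < 0) (Cset K) c.
Proof.
split.
  move=> [f [hf ce]].
  set N := [set i | c ord0 i < 0].
  case: hneg => j hj.
  have := @reduce R m K hK horth c N j _ _ #|[set: 'I_m] :\: N| [set: 'I_m].
  case.
  - by rewrite inE.
  - by move=> k; rewrite inE -leNgt.
  - by [].
  - exact: subsetT.
  - exists f; split; first by move=> i _; apply: hf.
    by rewrite ce; apply: eq_bigl => i; rewrite inE.
  move=> g [hg ge]; exists g; split.
    by move=> i hi; apply: hg; rewrite inE.
  by rewrite [LHS]ge; apply: eq_bigl => i; rewrite inE.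
move=> [f [hf ce]].
exists (fun i => if c ord0 i < 0 then f i else 0); split.
  move=> i _; case: ifP => h; first by apply: hf.
  split; first by apply: horth => j; rewrite mxE.
  by move=> j _; rewrite mxE.
by rewrite [LHS]ce big_mkcond.
Qed.
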